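(* Fix $a\in(1/2,1)$. There exist constants $c_a>0$ and $k_a$ (depending only on $a$) such that for all integers $k\ge k_a$, all $\varepsilon\in(0,1)$ and all $\delta\in(0,1/4)$, the $(\varepsilon,\delta)$-sample complexity of estimating the power sum $P_a(\vec p)=\sum_{i=1}^k p_i^a$ over $\Delta_k$ satisfies \[ C_{P_a}(\varepsilon,\delta)\ge c_a\,\log\frac1\delta\cdot\frac{k^{2-2a}}{\varepsilon^2}. \]
   Context: $\Delta_k$ is the set of probability distributions $\vec p=(p_1,\dots,p_k)$ on $[k]=\{1,\dots,k\}$; $\log$ is the natural logarithm. An estimator is any map $\hat f:[k]^*\to\mathbb{R}$ from finite sequences over $[k]$. For a property $f:\Delta_k\to\mathbb{R}$, the $(\varepsilon,\delta)$-sample complexity is \[ C_f(\varepsilon,\delta):=\min_{\hat f}\min\{n:\ \Pr_{X^n\sim\vec p}(|\hat f(X^n)-f(\vec p)|>\varepsilon)\le\delta\ \ \forall\vec p\in\Delta_k\}, \] where $X^n$ denotes $n$ i.i.d. samples from $\vec p$. *)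

(* Defs.v *)
From Stdlib Require Import Reals Lra List.
Import ListNotations.
Open Scope R_scope.

(* Symbols of [k] = {1,...,k} are encoded as the naturals 0,...,k-1. *)

(* A probability distribution on [k]: p i for i < k (values for i >= k are irrelevant). *)
Definition in_simplex (k : nat) (p : nat -> R) : Prop :=
  (forall i, (i < k)%nat -> 0 <= p i) /\
  fold_right Rplus 0 (map p (seq 0 k)) = 1.

(* x^a for x >= 0 with the convention 0^a = 0 (a > 0). *)
Definition rpow (x a : R) : R := if Rlt_dec 0 x then Rpower x a else 0.

Definition power_sum (a : R) (k : nat) (p : nat -> R) : R :=
  fold_right Rplus 0 (map (fun i => rpow (p i) a) (seq 0 k)).

Fixpoint all_seqs (k n : nat) : list (list nat) :=
  match n with
  | O => [ [] ]
  | S m => flat_map (fun i => map (cons i) (all_seqs k m)) (seq 0 k)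
  end.

Definition seq_prob (p : nat -> R) (x : list nat) : R :=
  fold_right (fun i acc => p i * acc) 1 x.

Definition fail_prob (k n : nat) (p : nat -> R) (fhat : list nat -> R)
  (f : (nat -> R) -> R) (eps : R) : R :=
  fold_right Rplus 0
    (map (fun x => if Rlt_dec eps (Rabs (fhat x - f p)) then seq_prob p x else 0)
         (all_seqs k n)).

(* C_f(eps,delta) is the least such n; "C_f(eps,delta) >= B" is equivalent to
   "every n with achievable n satisfies n >= B". *)
Definition achievable (k : nat) (f : (nat -> R) -> R) (eps delta : R) (n : nat) : Prop :=
  exists fhat : list nat -> R,
    forall p, in_simplex k p -> fail_prob k n p fhat f eps <= delta.

(* Main.v *)
From Stdlib Require Import ZArith.
Require Import Defs.
From Stdlib Require Import Reals Lra Lia List.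
Import ListNotations.
Open Scope R_scope.

Definition sumL {A} (L : list A) (f : A -> R) := fold_right Rplus 0 (map f L).

Lemma sumL_ext {A} (L : list A) f g : (forall x, f x = g x) -> sumL L f = sumL L g.
Proof. intros H; unfold sumL; induction L; simpl; auto. rewrite H, IHL; auto. Qed.

Lemma sumL_plus {A} (L : list A) f g : sumL L (fun x => f x + g x) = sumL L f + sumL L g.
Proof. unfold sumL; induction L; simpl; [lra|]. rewrite IHL; lra. Qed.

Lemma sumL_scal {A} (L : list A) c f : sumL L (fun x => c * f x) = c * sumL L f.
Proof. unfold sumL; induction L; simpl; [lra|]. rewrite IHL; lra. Qed.

Lemma sumL_le {A} (L : list A) f g : (forall x, f x <= g x) -> sumL L f <= sumL L g.
Proof. intros H; unfold sumL; induction L; simpl; [lra|]. specialize (H a); lra. Qed.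

Lemma sumL_app {A} (L1 L2 : list A) f : sumL (L1 ++ L2) f = sumL L1 f + sumL L2 f.
Proof. unfold sumL; induction L1; simpl; [lra|]. rewrite IHL1; lra. Qed.

Lemma sumL_flat_map {A B} (L : list A) (g : A -> list B) f :
  sumL (flat_map g L) f = sumL L (fun i => sumL (g i) f).
Proof. induction L; simpl; [reflexivity|]. rewrite sumL_app, IHL. reflexivity. Qed.

Lemma sumL_map {A B} (L : list A) (h : A -> B) f : sumL (map h L) f = sumL L (fun x => f (h x)).
Proof. unfold sumL; rewrite map_map; reflexivity. Qed.

Lemma sumL_all_S k n f :
  sumL (all_seqs k (S n)) f = sumL (seq 0 k) (fun i => sumL (all_seqs k n) (fun x => f (i :: x))).
Proof. simpl. rewrite sumL_flat_map. apply sumL_ext; intros i. apply sumL_map. Qed.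

Lemma seq_prob_pos p x : (forall i, 0 < p i) -> 0 < seq_prob p x.
Proof. intros H; induction x; simpl; [lra|]. specialize (H a); nra. Qed.

Lemma total_prob k n p : sumL (seq 0 k) p = 1 -> sumL (all_seqs k n) (seq_prob p) = 1.
Proof.
  intros Hs; induction n.
  - unfold sumL; simpl; lra.
  - rewrite sumL_all_S. rewrite <- Hs. apply sumL_ext; intros i. simpl.
    rewrite sumL_scal, IHn. lra.
Qed.

Lemma KL_tensor k n p q : (forall i, 0 < p i) -> (forall i, 0 < q i) ->
  sumL (seq 0 k) p = 1 ->
  sumL (all_seqs k n) (fun x => seq_prob p x * ln (seq_prob p x / seq_prob q x))
  = INR n * sumL (seq 0 k) (fun i => p i * ln (p i / q i)).
Proof.
  intros Hp Hq Hs; induction n.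
  - unfold sumL; simpl. unfold Rdiv; rewrite Rinv_1, Rmult_1_r, ln_1. lra.
  - rewrite sumL_all_S.
    transitivity (sumL (seq 0 k) (fun i => p i * ln (p i / q i) + (INR n * sumL (seq 0 k) (fun i => p i * ln (p i / q i))) * p i)).
    + apply sumL_ext; intros i. simpl.
      transitivity (sumL (all_seqs k n) (fun x => (p i * ln (p i / q i)) * seq_prob p x +
          p i * (seq_prob p x * ln (seq_prob p x / seq_prob q x)))).
      * apply sumL_ext; intros x.
        assert (H1 := seq_prob_pos p x Hp). assert (H2 := seq_prob_pos q x Hq).
        assert (E : p i * seq_prob p x / (q i * seq_prob q x) = (p i / q i) * (seq_prob p x / seq_prob q x)).
        { assert (Hqi := Hq i); field; repeat split; lra. }
        rewrite E, ln_mult.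
        -- ring.
        -- apply Rdiv_lt_0_compat; auto.
        -- apply Rdiv_lt_0_compat; auto.
      * rewrite sumL_plus, sumL_scal, sumL_scal, IHn, total_prob by auto. ring.
    + rewrite sumL_plus, sumL_scal, Hs, S_INR. ring.
Qed.

Lemma ln_le_sub1 y : 0 < y -> ln y <= y - 1.
Proof. intros Hy. pose proof (exp_ineq1_le (ln y)). rewrite exp_ln in H by auto. lra. Qed.

Lemma ln_le' x y : 0 < x -> x <= y -> ln x <= ln y.
Proof. intros Hx Hxy. destruct (Rle_lt_or_eq_dec _ _ Hxy) as [H|H].
  - left; apply ln_increasing; auto.
  - subst; lra. Qed.

Lemma sumL_nonneg {A} (L : list A) f : (forall x, 0 <= f x) -> 0 <= sumL L f.
Proof. intros H; unfold sumL; induction L; simpl; [lra|]. specialize (H a); lra. Qed.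

Lemma pt_bound P Q c : 0 < P -> 0 < Q -> 0 < c -> P - Q / c - P * ln c <= P * ln (P / Q).
Proof.
  intros HP HQ Hc.
  assert (H := ln_le_sub1 (Q / (P * c)) ltac:(apply Rdiv_lt_0_compat; nra)).
  assert (E1 : ln (Q / (P * c)) = ln Q - ln P - ln c).
  { unfold Rdiv. rewrite ln_mult, ln_Rinv, ln_mult; try nra. apply Rinv_0_lt_compat; nra. }
  assert (E2 : ln (P / Q) = ln P - ln Q).
  { unfold Rdiv. rewrite ln_mult, ln_Rinv; try lra. apply Rinv_0_lt_compat; nra. }
  rewrite E2. rewrite E1 in H.
  assert (E3 : Q / (P * c) = (Q / c) / P) by (field; lra).
  rewrite E3 in H.
  assert (H' : P * (ln Q - ln P - ln c) <= P * (Q / c / P - 1)) by (apply Rmult_le_compat_l; lra).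
  assert (E4 : P * (Q / c / P - 1) = Q / c - P) by (field; lra).
  lra.
Qed.

Lemma test_bound k n p q (fhat : list nat -> R) Pp Pq eps delta :
  (forall i, 0 < p i) -> (forall i, 0 < q i) ->
  sumL (seq 0 k) p = 1 -> sumL (seq 0 k) q = 1 ->
  0 < delta < 1/4 ->
  sumL (all_seqs k n) (fun x => if Rlt_dec eps (Rabs (fhat x - Pp)) then seq_prob p x else 0) <= delta ->
  sumL (all_seqs k n) (fun x => if Rlt_dec eps (Rabs (fhat x - Pq)) then seq_prob q x else 0) <= delta ->
  2 * eps < Rabs (Pq - Pp) ->
  ln (1 / delta) / 4 <= sumL (all_seqs k n) (fun x => seq_prob p x * ln (seq_prob p x / seq_prob q x)).
Proof.
  intros Hp Hq Hsp Hsq Hd HPB HQ Hsep.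
  set (L := all_seqs k n).
  set (P := seq_prob p). set (Q := seq_prob q).
  set (B := fun x => if Rlt_dec eps (Rabs (fhat x - Pp)) then true else false).
  set (PB := sumL L (fun x => if B x then P x else 0)).
  set (PA := sumL L (fun x => if B x then 0 else P x)).
  set (QB := sumL L (fun x => if B x then Q x else 0)).
  set (QA := sumL L (fun x => if B x then 0 else Q x)).
  assert (HPP : forall x, 0 < P x) by (intros; apply seq_prob_pos; auto).
  assert (HQQ : forall x, 0 < Q x) by (intros; apply seq_prob_pos; auto).
  assert (HPB' : PB <= delta).
  { eapply Rle_trans; [|exact HPB]. right. apply sumL_ext. intros x. unfold B.
    destruct (Rlt_dec eps _); reflexivity. }
  assert (HPAB : PA + PB = 1).
  { unfold PA, PB. rewrite <- sumL_plus. rewrite <- (total_prob k n p Hsp). apply sumL_ext.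
    intros x. destruct (B x); fold P; lra. }
  assert (HQAB : QA + QB = 1).
  { unfold QA, QB. rewrite <- sumL_plus. rewrite <- (total_prob k n q Hsq). apply sumL_ext.
    intros x. destruct (B x); fold Q; lra. }
  assert (HQA : QA <= delta).
  { eapply Rle_trans; [|exact HQ]. apply sumL_le. intros x. unfold B.
    destruct (Rlt_dec eps (Rabs (fhat x - Pp))) as [h|h].
    - destruct (Rlt_dec eps _); [left; apply HQQ | lra].
    - destruct (Rlt_dec eps (Rabs (fhat x - Pq))) as [h'|h']; [unfold Q; lra|].
      exfalso. apply h'. apply Rnot_lt_le in h.
      revert h Hsep. unfold Rabs. repeat destruct Rcase_abs; lra. }
  assert (HQB : 0 <= QB).
  { unfold QB. apply sumL_nonneg. intros x; destruct (B x); [left; apply HQQ|lra]. }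
  assert (HPA0 : 3/4 <= PA) by lra.
  set (Ld := ln (1 / delta)).
  assert (HL : 1 <= Ld).
  { unfold Ld. apply Rle_trans with (ln (exp 1)); [rewrite ln_exp; lra|]. apply ln_le'. apply exp_pos.
    pose proof exp_le_3. apply Rle_trans with 4; [lra|].
    apply (Rmult_le_reg_r delta); [lra|]. replace (1/delta*delta) with 1 by (field; lra). lra. }
  set (c1 := delta / PA). set (c2 := 1 / delta).
  assert (Hc1 : 0 < c1) by (unfold c1; apply Rdiv_lt_0_compat; lra).
  assert (Hc2 : 0 < c2) by (unfold c2; apply Rdiv_lt_0_compat; lra).
  assert (Hmain : sumL L (fun x => P x + (- / c2) * (if B x then Q x else 0) + (- / c1) * (if B x then 0 else Q x)
      + (- Ld) * (if B x then P x else 0) + (- ln c1) * (if B x then 0 else P x))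
      <= sumL L (fun x => P x * ln (P x / Q x))).
  { apply sumL_le. intros x. destruct (B x).
    - pose proof (pt_bound (P x) (Q x) c2 (HPP x) (HQQ x) Hc2). unfold Ld. fold c2.
      unfold Rdiv in *. lra.
    - pose proof (pt_bound (P x) (Q x) c1 (HPP x) (HQQ x) Hc1).
      unfold Rdiv in *. lra. }
  rewrite !sumL_plus, !sumL_scal in Hmain. fold PB PA QB QA in Hmain.
  assert (HP1 : sumL L P = 1) by (apply total_prob; auto). rewrite HP1 in Hmain.
  assert (Ec1 : ln c1 = - Ld - ln PA).
  { unfold c1, Ld. unfold Rdiv. rewrite ln_mult, ln_Rinv, Rmult_1_l, ln_Rinv; try lra.
    apply Rinv_0_lt_compat; lra. }
  assert (Ic1 : / c1 = PA / delta) by (unfold c1; field; lra).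
  assert (Ic2 : / c2 = delta) by (unfold c2; field; lra).
  rewrite Ec1, Ic1, Ic2 in Hmain.
  assert (HlnPA : PA * ln PA >= PA - 1).
  { pose proof (ln_le_sub1 (/ PA) ltac:(apply Rinv_0_lt_compat; lra)).
    rewrite ln_Rinv in H by lra.
    assert (PA * (- ln PA) <= PA * (/ PA - 1)) by (apply Rmult_le_compat_l; lra).
    assert (PA * (/PA - 1) = 1 - PA) by (field; lra). lra. }
  assert (HQA0 : 0 <= QA). { unfold QA. apply sumL_nonneg. intros x; destruct (B x); [lra|left; apply HQQ]. }
  assert (QA * (PA / delta) <= PA).
  { assert (QA * (PA/delta) = (QA / delta) * PA) by (field; lra).
    assert (QA / delta <= 1). { apply (Rmult_le_reg_r delta); [lra|]. unfold Rdiv.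
      rewrite Rmult_assoc, Rinv_l; lra. }
    nra. }
  assert (QB * delta <= delta) by nra.
  assert (PB * Ld <= delta * Ld) by nra.
  assert (PA * Ld >= (1 - delta) * Ld) by nra.
  nra.
Qed.

Lemma sum_const s len f c : (forall i, (s <= i < s + len)%nat -> f i = c) ->
  sumL (seq s len) f = INR len * c.
Proof.
  revert s; induction len; intros s H.
  - unfold sumL; simpl; lra.
  - simpl seq. unfold sumL; simpl map; simpl fold_right. fold (sumL (seq (S s) len) f).
    rewrite IHlen. rewrite H by lia. rewrite S_INR. ring.
    intros i Hi. apply H. lia.
Qed.

Lemma sum_blk k m f x y z : (2 * m <= k)%nat ->
  (forall i, (i < m)%nat -> f i = x) ->
  (forall i, (m <= i < 2 * m)%nat -> f i = y) ->
  (forall i, (2 * m <= i)%nat -> f i = z) ->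
  sumL (seq 0 k) f = INR m * x + INR m * y + (INR k - 2 * INR m) * z.
Proof.
  intros Hk Hx Hy Hz.
  replace k with (m + (m + (k - 2 * m)))%nat at 1 by lia.
  rewrite seq_app, sumL_app, seq_app, sumL_app.
  rewrite (sum_const 0 m f x), (sum_const (0 + m) m f y), (sum_const (0 + m + m) (k - 2 * m) f z).
  - rewrite minus_INR by lia. rewrite mult_INR. simpl (INR 2). ring.
  - intros; apply Hz; lia.
  - intros; apply Hy; lia.
  - intros; apply Hx; lia.
Qed.

Definition blk (m : nat) (x y z : R) (i : nat) : R :=
  if (i <? m)%nat then x else if (i <? 2 * m)%nat then y else z.

Ltac blk_tac := intros; unfold blk;
  repeat match goal with |- context [(?i <? ?m)%nat] => destruct (Nat.ltb_spec i m) end;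
  try lia; reflexivity.

Lemma pow_diff x y a : 0 < x -> 0 < y -> 0 <= a ->
  a * Rpower x a * (y - x) / y <= Rpower y a - Rpower x a.
Proof.
  intros Hx Hy Ha. unfold Rpower.
  assert (E : exp (a * ln y) = exp (a * ln x) * exp (a * (ln y - ln x))).
  { rewrite <- exp_plus. f_equal. ring. }
  pose proof (exp_ineq1_le (a * (ln y - ln x))).
  pose proof (ln_le_sub1 (x / y) ltac:(apply Rdiv_lt_0_compat; auto)).
  assert (Ed : ln (x / y) = ln x - ln y).
  { unfold Rdiv. rewrite ln_mult, ln_Rinv; try lra. apply Rinv_0_lt_compat; lra. }
  rewrite Ed in H0.
  assert (Hq : (y - x) / y = 1 - x / y) by (field; lra).
  assert (He := exp_pos (a * ln x)).
  rewrite E. unfold Rdiv in *.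
  assert (a * (1 - x * / y) <= a * (ln y - ln x)) by (apply Rmult_le_compat_l; lra).
  assert (Hyx : (y - x) * / y = 1 - x * / y) by (field; lra).
  assert (exp (a * ln x) * (1 + a * (ln y - ln x)) <= exp (a * ln x) * exp (a * (ln y - ln x)))
    by (apply Rmult_le_compat_l; lra).
  replace (a * exp (a * ln x) * (y - x) * / y) with (exp (a * ln x) * (a * ((y - x) * / y))) by ring.
  rewrite Hyx.
  assert (exp (a * ln x) * (a * (1 - x * / y)) <= exp (a * ln x) * (a * (ln y - ln x)))
    by (apply Rmult_le_compat_l; lra).
  nra.
Qed.

Lemma INR_unbounded (r : R) : exists N : nat, r < INR N.
Proof.
  destruct (archimed r) as [H1 _].
  destruct (Z.lt_ge_cases (up r) 0) as [h|h].
  - exists 0%nat. simpl. apply IZR_lt in h. lra.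
  - exists (Z.to_nat (up r)). rewrite INR_IZR_INZ, Z2Nat.id by lia. lra.
Qed.

Lemma exp_le' x y : x <= y -> exp x <= exp y.
Proof. intros H. destruct (Rle_lt_or_eq_dec _ _ H) as [h|h]; [left; apply exp_increasing; auto|subst; lra]. Qed.

Lemma rpow_pos x a : 0 < x -> rpow x a = Rpower x a.
Proof. intros H. unfold rpow. destruct (Rlt_dec 0 x); [reflexivity|lra]. Qed.

Theorem theorem2 (a : R) (Ha : 1/2 < a < 1) :
  exists (c : R) (ka : nat), 0 < c /\
    forall (k : nat) (eps delta : R) (n : nat),
      (ka <= k)%nat -> 0 < eps < 1 -> 0 < delta < 1/4 ->
      achievable k (power_sum a k) eps delta n ->
      c * ln (1 / delta) * Rpower (INR k) (2 - 2 * a) / eps ^ 2 <= INR n.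
Proof.
  set (b3 := Rpower 3 a).
  assert (Hb1 : 1 < b3).
  { unfold b3. rewrite <- (Rpower_O 3) by lra. apply Rpower_lt; lra. }
  assert (Hb3 : b3 < 3).
  { unfold b3. rewrite <- (Rpower_1 3) at 2 by lra. apply Rpower_lt; lra. }
  set (sg := (3 - b3) / 16).
  assert (Hsg : 0 < sg <= 1/8) by (unfold sg; split; lra).
  set (g0 := 1 / (1 + 2 * sg) - b3 / (3 - 2 * sg)).
  assert (Hg0 : 0 < g0).
  { unfold g0. assert (E : 1 / (1 + 2 * sg) - b3 / (3 - 2 * sg) =
      ((3 - 2 * sg) - b3 * (1 + 2 * sg)) / ((1 + 2 * sg) * (3 - 2 * sg))) by (field; lra).
    rewrite E. apply Rdiv_lt_0_compat; [|nra]. unfold sg. nra. }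
  set (e1 := exp (- (a * ln 2))).
  assert (He1 : 0 < e1) by apply exp_pos.
  set (c := a ^ 2 * g0 ^ 2 * e1 ^ 2 / 162).
  set (M := 9 / (2 * a * g0 * sg)).
  assert (HM : 0 < M) by (unfold M; apply Rdiv_lt_0_compat; [lra|]; repeat apply Rmult_lt_0_compat; lra).
  set (X := exp (ln (M / e1) / (1 - a))).
  destruct (INR_unbounded X) as [N HN].
  exists c, (Nat.max N 3). split.
  { unfold c. apply Rdiv_lt_0_compat; [|lra]. repeat apply Rmult_lt_0_compat; try apply pow_lt; lra. }
  intros k eps delta n Hk Heps Hd [fhat Hf].
  set (K := INR k).
  assert (HK3 : 3 <= K) by (unfold K; replace 3 with (INR 3) by (simpl; lra); apply le_INR; lia).
  assert (HKX : X <= K) by (unfold K; apply Rle_trans with (INR N); [lra|apply le_INR; lia]).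
  set (m := (k / 2)%nat).
  assert (Hm1 : (2 * m <= k)%nat) by (unfold m; pose proof (Nat.div_mod k 2); pose proof (Nat.mod_upper_bound k 2); lia).
  assert (Hm2 : (k <= 2 * m + 1)%nat) by (unfold m; pose proof (Nat.div_mod k 2); pose proof (Nat.mod_upper_bound k 2); lia).
  assert (Rm1 : 2 * INR m <= K) by (unfold K; replace (2 * INR m) with (INR (2 * m)) by (rewrite mult_INR; simpl; lra); apply le_INR; auto).
  assert (Rm2 : K <= 2 * INR m + 1) by (unfold K; replace (2 * INR m + 1) with (INR (2 * m + 1)) by (rewrite plus_INR, mult_INR; simpl; lra); apply le_INR; auto).
  set (RK := exp ((1 - a) * ln K)).
  assert (HRK : M / e1 <= RK).
  { unfold RK. rewrite <- (exp_ln (M / e1)) at 1 by (apply Rdiv_lt_0_compat; lra).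
    apply exp_le'.
    assert (ln X <= ln K) by (apply ln_le'; [apply exp_pos|auto]).
    unfold X in H. rewrite ln_exp in H.
    assert (Hd1 : ln (M / e1) = (ln (M / e1) / (1 - a)) * (1 - a)) by (field; lra).
    rewrite Hd1. rewrite (Rmult_comm (1 - a)). apply Rmult_le_compat_r; lra. }
  set (Z := e1 * RK).
  assert (HZ : M <= Z).
  { unfold Z. apply (Rmult_le_compat_l e1) in HRK; [|lra].
    replace (e1 * (M / e1)) with M in HRK by (field; lra). auto. }
  set (u := 1 / (2 * K)).
  assert (Hu : 0 < u) by (unfold u; apply Rdiv_lt_0_compat; lra).
  assert (HZeq : K * Rpower u a = Z).
  { unfold Z, RK, e1, Rpower.
    assert (Eu : ln u = - (ln 2 + ln K)).
    { unfold u. unfold Rdiv. rewrite Rmult_1_l, ln_Rinv, ln_mult; lra. }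
    rewrite Eu. rewrite <- (exp_ln K) at 1 by lra. rewrite <- !exp_plus. f_equal. ring. }
  set (W := a * g0 * Z).
  assert (HW : 0 < W) by (unfold W; apply Rmult_lt_0_compat; [apply Rmult_lt_0_compat|]; lra).
  set (s := 9 * eps / (2 * W)).
  assert (Hs0 : 0 < s) by (unfold s; apply Rdiv_lt_0_compat; lra).
  assert (Hs1 : s <= sg).
  { assert (HMe : M * (2 * a * g0 * sg) = 9) by (unfold M; field; repeat split; lra).
    assert (9 <= 2 * W * sg).
    { rewrite <- HMe. unfold W. assert (0 < 2 * a * g0 * sg) by (repeat apply Rmult_lt_0_compat; lra). nra. }
    unfold s. apply (Rmult_le_reg_r (2 * W)); [lra|]. unfold Rdiv.
    rewrite Rmult_assoc, Rinv_l by lra. nra. }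
  set (t := 2 * s * u).
  assert (Ht : 0 < t) by (unfold t; nra).
  assert (Htu : t <= u / 4) by (unfold t; nra).
  set (p := blk m u (3 * u) (2 * u)).
  set (q := blk m (u + t) (3 * u - t) (2 * u)).
  assert (Hp : forall i, 0 < p i) by (intros; unfold p, blk; repeat destruct (_ <? _)%nat; lra).
  assert (Hq : forall i, 0 < q i) by (intros; unfold q, blk; repeat destruct (_ <? _)%nat; lra).
  assert (Hsp : sumL (seq 0 k) p = 1).
  { rewrite (sum_blk k m p u (3 * u) (2 * u)) by (auto; unfold p; blk_tac).
    fold K. unfold u. field. lra. }
  assert (Hsq : sumL (seq 0 k) q = 1).
  { rewrite (sum_blk k m q (u + t) (3 * u - t) (2 * u)) by (auto; unfold q; blk_tac).
    fold K. unfold u. field. lra. }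
  assert (Hinp : in_simplex k p) by (split; [intros; left; auto | exact Hsp]).
  assert (Hinq : in_simplex k q) by (split; [intros; left; auto | exact Hsq]).
  assert (HPp : power_sum a k p = INR m * Rpower u a + INR m * Rpower (3 * u) a + (K - 2 * INR m) * Rpower (2 * u) a).
  { unfold power_sum. fold (sumL (seq 0 k) (fun i => rpow (p i) a)).
    rewrite (sum_blk k m _ (rpow u a) (rpow (3 * u) a) (rpow (2 * u) a)) by (auto; unfold p; blk_tac).
    rewrite !rpow_pos by lra. reflexivity. }
  assert (HPq : power_sum a k q = INR m * Rpower (u + t) a + INR m * Rpower (3 * u - t) a + (K - 2 * INR m) * Rpower (2 * u) a).
  { unfold power_sum. fold (sumL (seq 0 k) (fun i => rpow (q i) a)).
    rewrite (sum_blk k m _ (rpow (u + t) a) (rpow (3 * u - t) a) (rpow (2 * u) a)) by (auto; unfold q; blk_tac).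
    rewrite !rpow_pos by lra. reflexivity. }
  set (U := Rpower u a).
  assert (HU : 0 < U) by (unfold U, Rpower; apply exp_pos).
  assert (H3u : Rpower (3 * u) a = b3 * U).
  { unfold b3, U. rewrite Rpower_mult_distr; lra. }
  assert (D1 := pow_diff u (u + t) a Hu ltac:(lra) ltac:(lra)).
  assert (D2 := pow_diff (3 * u) (3 * u - t) a ltac:(lra) ltac:(lra) ltac:(lra)).
  fold U in D1. rewrite H3u in D2.
  assert (R1 : (u + t - u) / (u + t) = 2 * s / (1 + 2 * s)) by (unfold t; field; nra).
  assert (R2 : (3 * u - t - 3 * u) / (3 * u - t) = - (2 * s / (3 - 2 * s))) by (unfold t; field; nra).
  replace (a * U * (u + t - u) / (u + t)) with (a * U * ((u + t - u) / (u + t))) in D1 by (field; lra).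
  replace (a * (b3 * U) * (3 * u - t - 3 * u) / (3 * u - t)) with (a * (b3 * U) * ((3 * u - t - 3 * u) / (3 * u - t))) in D2 by (field; lra).
  rewrite R1 in D1. rewrite R2 in D2.
  assert (G : g0 <= 1 / (1 + 2 * s) - b3 / (3 - 2 * s)).
  { unfold g0. assert (1 / (1 + 2 * sg) <= 1 / (1 + 2 * s)).
    { apply Rmult_le_reg_r with ((1 + 2 * sg) * (1 + 2 * s)); [nra|].
      replace (1 / (1 + 2 * sg) * ((1 + 2 * sg) * (1 + 2 * s))) with (1 + 2 * s) by (field; lra).
      replace (1 / (1 + 2 * s) * ((1 + 2 * sg) * (1 + 2 * s))) with (1 + 2 * sg) by (field; lra). lra. }
    assert (b3 / (3 - 2 * s) <= b3 / (3 - 2 * sg)).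
    { apply Rmult_le_reg_r with ((3 - 2 * sg) * (3 - 2 * s)); [nra|].
      replace (b3 / (3 - 2 * s) * ((3 - 2 * sg) * (3 - 2 * s))) with (b3 * (3 - 2 * sg)) by (field; lra).
      replace (b3 / (3 - 2 * sg) * ((3 - 2 * sg) * (3 - 2 * s))) with (b3 * (3 - 2 * s)) by (field; lra). nra. }
    lra. }
  assert (Hdiff : power_sum a k q - power_sum a k p >= INR m * (2 * a * U * s * g0)).
  { rewrite HPp, HPq. rewrite H3u. fold U.
    assert (Em : INR m * (Rpower (u + t) a) + INR m * Rpower (3 * u - t) a + (K - 2 * INR m) * Rpower (2 * u) a -
      (INR m * U + INR m * (b3 * U) + (K - 2 * INR m) * Rpower (2 * u) a) =
      INR m * ((Rpower (u + t) a - U) + (Rpower (3 * u - t) a - b3 * U))) by (unfold U; ring).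
    rewrite Em. apply Rle_ge. apply Rmult_le_compat_l; [apply pos_INR|].
    assert (E2 : a * U * (2 * s / (1 + 2 * s)) + a * (b3 * U) * - (2 * s / (3 - 2 * s)) =
       2 * a * U * s * (1 / (1 + 2 * s) - b3 / (3 - 2 * s))) by (field; lra).
    assert (2 * a * U * s * g0 <= 2 * a * U * s * (1 / (1 + 2 * s) - b3 / (3 - 2 * s))).
    { apply Rmult_le_compat_l; [|auto]. assert (0 < a * U) by (apply Rmult_lt_0_compat; lra). assert (0 < a * U * s) by (apply Rmult_lt_0_compat; lra). nra. }
    lra. }
  assert (Hsep : 2 * eps < Rabs (power_sum a k q - power_sum a k p)).
  { assert (Hmr : K / 3 <= INR m) by lra.
    assert (Hpos : 0 < 2 * a * U * s * g0) by (apply Rmult_lt_0_compat; [|lra]; apply Rmult_lt_0_compat; [|lra]; apply Rmult_lt_0_compat; [|lra]; apply Rmult_lt_0_compat; lra).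
    assert (K / 3 * (2 * a * U * s * g0) <= INR m * (2 * a * U * s * g0)) by (apply Rmult_le_compat_r; lra).
    assert (E3 : K / 3 * (2 * a * U * s * g0) = 3 * eps).
    { replace (K / 3 * (2 * a * U * s * g0)) with (2 / 3 * (a * g0 * (K * U)) * s) by field.
      unfold U. rewrite HZeq. fold W. unfold s. field. lra. }
    rewrite Rabs_right; lra. }
  assert (HKL1 : sumL (seq 0 k) (fun i => p i * ln (p i / q i)) <= 2 * s ^ 2).
  { rewrite (sum_blk k m _ (u * ln (u / (u + t))) (3 * u * ln (3 * u / (3 * u - t))) (2 * u * ln (2 * u / (2 * u)))) by (auto; unfold p, q; blk_tac).
    replace (2 * u / (2 * u)) with 1 by (field; lra). rewrite ln_1, Rmult_0_r, Rmult_0_r, Rplus_0_r.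
    assert (L1 : u * ln (u / (u + t)) <= u * (u / (u + t) - 1)).
    { apply Rmult_le_compat_l; [lra|]. apply ln_le_sub1. apply Rdiv_lt_0_compat; lra. }
    assert (L2 : 3 * u * ln (3 * u / (3 * u - t)) <= 3 * u * (3 * u / (3 * u - t) - 1)).
    { apply Rmult_le_compat_l; [lra|]. apply ln_le_sub1. apply Rdiv_lt_0_compat; lra. }
    assert (E4 : u * (u / (u + t) - 1) + 3 * u * (3 * u / (3 * u - t) - 1) =
       u * (16 * s ^ 2 / ((1 + 2 * s) * (3 - 2 * s)))) by (unfold t; field; split; nra).
    assert (E5 : 16 * s ^ 2 / ((1 + 2 * s) * (3 - 2 * s)) <= 6 * s ^ 2).
    { apply Rmult_le_reg_r with ((1 + 2 * s) * (3 - 2 * s)); [nra|].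
      replace (16 * s ^ 2 / ((1 + 2 * s) * (3 - 2 * s)) * ((1 + 2 * s) * (3 - 2 * s))) with (16 * s ^ 2) by (field; nra).
      nra. }
    assert (Hmu : INR m * u <= 1 / 4) by (unfold u; apply Rmult_le_reg_r with (2 * K); [lra|];
      replace (INR m * (1 / (2 * K)) * (2 * K)) with (INR m) by (field; lra); lra).
    assert (0 <= INR m) by apply pos_INR.
    assert (INR m * (u * ln (u / (u + t)) + 3 * u * ln (3 * u / (3 * u - t))) <= INR m * (u * (16 * s ^ 2 / ((1 + 2 * s) * (3 - 2 * s))))).
    { apply Rmult_le_compat_l; lra. }
    assert (INR m * (u * (16 * s ^ 2 / ((1 + 2 * s) * (3 - 2 * s)))) <= INR m * u * (6 * s ^ 2)).
    { rewrite <- Rmult_assoc. apply Rmult_le_compat_l; [nra|lra]. }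
    assert (INR m * u * (6 * s ^ 2) <= 1 / 4 * (6 * s ^ 2)) by (apply Rmult_le_compat_r; nra).
    nra. }
  assert (HT := test_bound k n p q fhat (power_sum a k p) (power_sum a k q) eps delta Hp Hq Hsp Hsq Hd
     (Hf p Hinp) (Hf q Hinq) Hsep).
  rewrite KL_tensor in HT by auto.
  set (Ld := ln (1 / delta)) in *.
  assert (HL : 0 < Ld).
  { unfold Ld. rewrite <- ln_1. apply ln_increasing; [lra|].
    apply (Rmult_lt_reg_r delta); [lra|]. replace (1 / delta * delta) with 1 by (field; lra). lra. }
  assert (Hn : Ld / 4 <= INR n * (2 * s ^ 2)).
  { eapply Rle_trans; [exact HT|]. apply Rmult_le_compat_l; [apply pos_INR|auto]. }
  assert (HRp : Rpower K (2 - 2 * a) = RK ^ 2).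
  { unfold Rpower, RK. simpl. rewrite Rmult_1_r, <- exp_plus. f_equal. ring. }
  rewrite HRp. fold K.
  assert (Ec : c * Ld * RK ^ 2 / eps ^ 2 = (Ld / 4) / (2 * s ^ 2)).
  { assert (0 < RK) by apply exp_pos. unfold c, s, W, Z. field. repeat split; lra. }
  rewrite Ec. apply (Rmult_le_reg_r (2 * s ^ 2)); [nra|].
  replace (Ld / 4 / (2 * s ^ 2) * (2 * s ^ 2)) with (Ld / 4) by (field; lra). lra.
Qed.
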